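(* Let $k$ be a field. For $n\ge 3$ let $C_n$ be the cycle on $n$ vertices, and for $n\ge 1$ let $P_n$ be the path on $n$ vertices. Then $$\deg h_{R/I(C_n)}(t)=\left\lfloor \tfrac{n}{2}\right\rfloor \quad (n\ge 3),$$ and, for $n\ge 1$, $$\deg h_{R/I(P_n)}(t)=\begin{cases}\left\lceil \tfrac n2\right\rceil & \text{if } n\equiv 0,2 \pmod 3,\\ \left\lceil \tfrac n2\right\rceil-1 & \text{if } n\equiv 1\pmod 3.\end{cases}$$
   Context: For a finite simple graph $G$ with vertex set $\{x_1,\dots,x_n\}$, $R=k[x_1,\dots,x_n]$ and the edge ideal is $I(G)=(x_ix_j : \{x_i,x_j\}\in E(G))\subseteq R$. The Hilbert series $H_{R/I(G)}(t)=\sum_{i\ge0}\dim_k (R/I(G))_i\, t^i$ can be written as a reduced rational function $h_{R/I(G)}(t)/(1-t)^{\dim R/I(G)}$ with $h_{R/I(G)}(t)\in\mathbb Z[t]$, $h_{R/I(G)}(1)\neq 0$; $h_{R/I(G)}(t)$ is the $h$-polynomial of $R/I(G)$. *)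

(* Defs.v *)
From HB Require Import structures.
From mathcomp Require Import all_boot all_order all_algebra.
Set Implicit Arguments. Unset Strict Implicit. Unset Printing Implicit Defensive.
Import Order.TTheory GRing.Theory Num.Theory.
Local Open Scope ring_scope.

(* Monomials of total degree d in the variables x_0, ..., x_{n-1}:
   exponent vectors m : 'I_n -> nat (exponents bounded by d) with sum d. *)
Definition mon (n d : nat) :=
  {m : {ffun 'I_n -> 'I_d.+1} | (\sum_i (m i : nat) == d)%N}.

(* The degree-d homogeneous component R_d of R = k[x_0..x_{n-1}], written in
   its monomial basis: a polynomial of degree d is its coefficient vector. *)
Definition Rdeg (k : fieldType) (n d : nat) := {ffun mon n d -> k^o}.

Definition monom (k : fieldType) (n d : nat) (m : mon n d) : Rdeg k n d :=
  [ffun m' => (m' == m)%:R].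

Definition mdiv2 (n d : nat) (i j : 'I_n) (m : mon n d) : bool :=
  [forall l : 'I_n, ((i == l) + (j == l) <= (sval m l : nat))%N].

(* The degree-d component I(G)_d of the edge ideal I(G) = (x_i x_j : {i,j} in E):
   it is spanned by the products x^a * x_i x_j with deg a = d - 2, i.e. by the
   degree-d monomials divisible by some x_i x_j with {i,j} an edge. *)
Definition edge_ideal_deg (k : fieldType) (n : nat) (E : rel 'I_n) (d : nat)
  : {vspace Rdeg k n d} :=
  <<[seq monom k m | m in [pred m : mon n d |
       [exists i : 'I_n, exists j : 'I_n, E i j && mdiv2 i j m]]]>>%VS.

Definition hilb (k : fieldType) (n : nat) (E : rel 'I_n) (d : nat) : nat :=
  (\dim (fullv : {vspace Rdeg k n d}) - \dim (edge_ideal_deg k E d))%N.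

(* h(t) = H(t) (1-t)^D as formal power series, coefficientwise:
   h_i = sum_{j <= min(i,D)} (-1)^j C(D,j) HF(i-j). *)
Definition hs_times_pow (HF : nat -> nat) (D i : nat) : int :=
  \sum_(j < D.+1 | (j <= i)%N) (-1) ^+ j * ('C(D, j))%:R * (HF (i - j)%N)%:R.

(* (h, D) is a reduced rational representation H(t) = h(t)/(1-t)^D,
   h in Z[t], h(1) <> 0. *)
Definition reduced_hilb_rep (HF : nat -> nat) (h : {poly int}) (D : nat) : Prop :=
  (forall i : nat, h`_i = hs_times_pow HF D i) /\ h.[1] != 0.

(* "deg h(t) = e", where h is the h-polynomial of the Hilbert series with
   Hilbert function HF: such a reduced representation exists, and any reduced
   representation has numerator of degree e. *)
Definition hpoly_deg_is (HF : nat -> nat) (e : nat) : Prop :=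
  (exists h D, reduced_hilb_rep HF h D) /\
  (forall h D, reduced_hilb_rep HF h D -> (size h).-1 = e).

Definition cycle_rel (n : nat) : rel 'I_n :=
  fun i j => ((j : nat) == (i.+1 %% n)%N) || ((i : nat) == (j.+1 %% n)%N).

Definition path_rel (n : nat) : rel 'I_n :=
  fun i j => ((j : nat) == i.+1) || ((i : nat) == j.+1).
Arguments cycle_rel n : clear implicits.
Arguments path_rel n : clear implicits.

(* Main.v *)
Require Import Defs.
From HB Require Import structures.
From mathcomp Require Import all_boot all_order all_algebra zify.
From mathcomp Require Import ring.
From Stdlib Require Import Lia.
Set Implicit Arguments. Unset Strict Implicit. Unset Printing Implicit Defensive.
Import Order.TTheory GRing.Theory Num.Theory.
Open Scope ring_scope.
Lemma dim_full (k:fieldType) n d : \dim (fullv : {vspace Rdeg k n d}) = #|{: mon n d}|.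
Proof. by rewrite dimvf /dim /= muln1. Qed.

Lemma scaleffE (k : fieldType) (I : finType) (a : k) (f : {ffun I -> k^o}) x : (a *: f) x = a * f x.
Proof. by rewrite ffunE. Qed.

Lemma free_monoms (k : fieldType) n d (s : seq (mon n d)) : uniq s -> free (map (@monom k n d) s).
Proof.
move=> us; apply/(@freeP _ _ _ (in_tuple _)) => c Hc i.
have Hi : (i < size s)%N by rewrite -(size_map (@monom k n d)) ltn_ord.
have x0 : mon n d by case: s us c Hc i Hi => // x.
have := congr1 (fun f : Rdeg k n d => f (nth x0 s i)) Hc.
rewrite sum_ffunE ffunE => <-.
rewrite (bigD1 i) // big1 /=.
  by rewrite addr0 scaleffE (nth_map x0) // ffunE eqxx mulr1.
move=> j nji; have Hj : (j < size s)%N by rewrite -(size_map (@monom k n d)) ltn_ord.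
rewrite scaleffE /= (nth_map x0) // ffunE.
rewrite nth_uniq // (_ : (i == j :> nat) = false) ?mulr0 //; apply/negbTE; by rewrite eq_sym.
Qed.

Definition cL (L : nat) := (L.+1 %/ 2)%N.
Fixpoint pp (L : nat) : {poly int} * {poly int} :=
  match L with
  | 0 => (1, 1)
  | L'.+1 => ((pp L').2, (1 - 'X)^+(cL L'.+2 - cL L'.+1) * (pp L').2 + 'X * (pp L').1)
  end.
Definition pL L := (pp L).1.
Lemma pL0 : pL 0 = 1. Proof. by []. Qed.
Lemma pL1 : pL 1 = 1. Proof. by []. Qed.
Lemma pLS L : pL L.+2 = (1-'X)^+(cL L.+2 - cL L.+1) * pL L.+1 + 'X * pL L.
Proof. by []. Qed.

Section Count.
Variables (n : nat) (E : rel 'I_n).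

Definition mv d (m : mon n d) (x : 'I_n) : nat := sval m x.
Definition divE d (m : mon n d) := [exists i, exists j, E i j && mdiv2 i j m].
Definition Qs (S : {set 'I_n}) d :=
  #|[set m : mon n d | ~~ divE m & [forall x, (mv m x != 0%N) ==> (x \in S)]]|.

Lemma hilbQ (k : fieldType) d : hilb k E d = Qs setT d.
Proof.
rewrite /hilb dim_full /edge_ideal_deg.
set P := [pred m : mon n d | _].
have := free_monoms k (enum_uniq P).
rewrite /free => /eqP; rewrite /image_mem => ->.
rewrite size_map -cardE /Qs -(cardC P) addKn.
apply: eq_card => m; rewrite !inE.
by apply/idP/idP => [->|/andP[]//]; apply/forallP => x; rewrite inE implybT.
Qed.

Lemma sum_mv d (m : mon n d) : (\sum_x mv m x)%N = d.
Proof. exact/eqP/(svalP m). Qed.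

Lemma mv_le d (m : mon n d) x : (mv m x <= d)%N.
Proof. by rewrite -ltnS; exact: ltn_ord. Qed.

Lemma monP d (m1 m2 : mon n d) : (forall x, mv m1 x = mv m2 x) -> m1 = m2.
Proof. by move=> H; apply: val_inj; apply/ffunP => x; apply: val_inj; exact: H. Qed.

Lemma mk_ok d (g : 'I_n -> nat) (H : (\sum_i g i)%N = d) :
  (\sum_i (([ffun i => inord (g i)] : {ffun 'I_n -> 'I_d.+1}) i : nat) == d)%N.
Proof.
rewrite (eq_bigr g) ?H // => i _; rewrite ffunE inordK // ltnS -H.
by rewrite (bigD1 i) //= leq_addr.
Qed.

Definition mk d (g : 'I_n -> nat) (H : (\sum_i g i)%N = d) : mon n d :=
  exist (fun m : {ffun 'I_n -> 'I_d.+1} => (\sum_i (m i : nat) == d)%N) _ (mk_ok H).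

Lemma mkE d g (H : (\sum_i g i)%N = d) x : mv (mk H) x = g x.
Proof.
rewrite /mv /= ffunE inordK // ltnS -H.
by rewrite (bigD1 x) //= leq_addr.
Qed.

Lemma mdiv2P d (m : mon n d) i j :
  reflect (forall l, ((i == l) + (j == l) <= mv m l)%N) (mdiv2 i j m).
Proof. exact: forallP. Qed.

Lemma mdiv2_mono d1 d2 (m1 : mon n d1) (m2 : mon n d2) i j :
  (forall l, (mv m1 l <= mv m2 l)%N) -> mdiv2 i j m1 -> mdiv2 i j m2.
Proof.
move=> H /mdiv2P H1; apply/mdiv2P => l; exact: leq_trans (H1 l) (H l).
Qed.

Lemma Qs0 S : Qs S 0 = 1%N.
Proof.
have H0 : (\sum_(i < n) (fun _ => 0%N) i)%N = 0%N by rewrite big1.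
have mv0 : forall (m : mon n 0) x, mv m x = 0%N.
  by move=> m x; have := mv_le m x; rewrite leqn0 => /eqP.
apply: (eq_card1 (x := mk H0)) => m; rewrite !inE.
have -> : (m == mk H0) = true.
  by apply/eqP/monP => x; rewrite mkE mv0.
apply/andP; split.
  apply/negP => /existsP[i /existsP[j /andP[_ /mdiv2P /(_ i)]]].
  by rewrite eqxx mv0.
by apply/forallP => x; rewrite mv0.
Qed.

Lemma Qs_set0 d : Qs set0 d.+1 = 0%N.
Proof.
apply: eq_card0 => m; rewrite !inE; apply/negP => /andP[_ /forallP H].
have : (\sum_x mv m x = 0)%N.
  apply: big1 => x _; apply/eqP; apply: contraT => /(implyP (H x)).
  by rewrite inE.
by rewrite sum_mv.
Qed.

Section Del.
Variables (v : 'I_n).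
Hypothesis Evv : ~~ E v v.
Definition Nb := [set u | E v u || E u v].

Lemma addv_ok d (m : mon n d) : (\sum_x (mv m x + (x == v)))%N = d.+1.
Proof.
rewrite big_split /= sum_mv (bigD1 v) //= eqxx big1 ?addn0 ?addn1 //.
by move=> x /negbTE ->.
Qed.

Definition addv d (m : mon n d) : mon n d.+1 := mk (addv_ok m).

Lemma addvE d (m : mon n d) x : mv (addv m) x = (mv m x + (x == v))%N.
Proof. by rewrite mkE. Qed.

Lemma addv_inj d : injective (@addv d).
Proof.
move=> m1 m2 H; apply: monP => x.
by have := congr1 (fun m => mv m x) H; rewrite /= !addvE => /addIn.
Qed.

Lemma Qs_del (S : {set 'I_n}) d : v \in S ->
  Qs S d.+1 = (Qs (S :\ v) d.+1 + Qs (S :\: Nb) d)%N.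
Proof.
move=> vS.
rewrite /Qs.
set A := [set m : mon n d.+1 | ~~ divE m & _].
rewrite -(cardsID [set m : mon n d.+1 | mv m v == 0%N] A); congr addn.
  apply: eq_card => m; rewrite !inE.
  case: (boolP (divE m)) => //= _.
  apply/idP/idP.
    move=> /andP[/forallP H /eqP Hv]; apply/forallP => x; apply/implyP => Hx.
    rewrite !inE (implyP (H x) Hx) andbT; apply: contra Hx => /eqP ->.
    by rewrite Hv.
  move=> /forallP H; apply/andP; split.
    apply/forallP => x; apply/implyP => Hx.
    by have := implyP (H x) Hx; rewrite !inE => /andP[].
  apply: contraT => Hv; have := implyP (H v) Hv; by rewrite !inE eqxx.
set B := [set m : mon n d | ~~ divE m & _].
rewrite -(card_in_imset (f := @addv d) (D := B)); last by move=> ? ? _ _; exact: addv_inj.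
apply: eq_card => m'; rewrite !inE.
apply/idP/idP.
  move=> /andP[/negbTE Hv0 /andP[Hdiv /forallP Hsupp]].
  have Hv : (1 <= mv m' v)%N by rewrite lt0n Hv0.
  have Hle : forall x, ((x == v) <= mv m' x)%N.
    by move=> x; case: eqP => [->|] //.
  have Hs : (\sum_x (mv m' x - (x == v)))%N = d.
    have E1 : (\sum_x (mv m' x - (x == v)) + \sum_x (x == v : nat) = \sum_x mv m' x)%N.
      by rewrite -big_split; apply: eq_bigr => x _; rewrite /= subnK.
    have E2 : (\sum_x (x == v : nat))%N = 1%N.
      by rewrite (bigD1 v) //= eqxx big1 // => x /negbTE ->.
    by move: E1; rewrite sum_mv E2 addn1 => -[].
  apply/imsetP; exists (mk Hs); last first.
    by apply: monP => x; rewrite addvE mkE subnK.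
  rewrite inE; apply/andP; split.
    apply: contra Hdiv => /existsP[i /existsP[j /andP[Eij Hij]]].
    apply/existsP; exists i; apply/existsP; exists j; rewrite Eij /=.
    by apply: mdiv2_mono Hij => l; rewrite mkE leq_subr.
  apply/forallP => x; apply/implyP => Hx.
  have Hx' : mv m' x != 0%N.
    by apply: contra Hx; rewrite mkE => /eqP ->.
  rewrite !inE (implyP (Hsupp x) Hx') andbT.
  case: (eqVneq x v) => [->|xv]; first by rewrite orbb.
  apply/negP => /orP[] Ex; move/negP: Hdiv; apply; apply/existsP.
    exists v; apply/existsP; exists x; rewrite Ex /=; apply/mdiv2P => l.
    case: (eqVneq v l) => [<-|vl]; first by rewrite (negbTE xv) addn0.
    rewrite addnC /=; case: (eqVneq x l) => [<-|] //=; by rewrite lt0n.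
  exists x; apply/existsP; exists v; rewrite Ex /=; apply/mdiv2P => l.
  case: (eqVneq v l) => [<-|vl]; first by rewrite (negbTE xv).
  rewrite addn0; case: (eqVneq x l) => [<-|] //=; by rewrite lt0n.
move=> /imsetP[m]; rewrite inE => /andP[Hdiv /forallP Hsupp] ->.
rewrite addvE eqxx addn1 /=; apply/andP; split.
  apply/negP => /existsP[i /existsP[j /andP[Eij /mdiv2P Hij]]].
  case: (eqVneq i v) => [iv|iv].
    subst i.
    have jv : j != v by apply/eqP => jv; move: Evv; rewrite -{2}jv Eij.
    have := Hij j; rewrite eqxx addvE (negbTE jv) addn0 eq_sym (negbTE jv) /= => Hj.
    have := implyP (Hsupp j); rewrite -lt0n => /(_ Hj); rewrite !inE Eij /=.
    by [].
  case: (eqVneq j v) => [jv|jv].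
    subst j.
    have := Hij i; rewrite eqxx [v == i]eq_sym (negbTE iv) addvE (negbTE iv) => Hi; have {Hi} Hi : (0 < mv m i)%N by move: Hi; case: (mv m i).
    have := implyP (Hsupp i); rewrite -lt0n => /(_ Hi); rewrite !inE Eij orbT /=.
    by [].
  move/negP: Hdiv; apply; apply/existsP; exists i; apply/existsP; exists j.
  rewrite Eij /=; apply/mdiv2P => l; have := Hij l; rewrite addvE.
  case: (eqVneq l v) => [->|_]; last by rewrite addn0.
  by rewrite (negbTE iv) (negbTE jv).
apply/forallP => x; apply/implyP; rewrite addvE.
case: (eqVneq x v) => [-> _|xv]; first exact: vS.
rewrite addn0 => Hx; have := implyP (Hsupp x) Hx; rewrite !inE => /andP[_ ->].
by [].
Qed.
End Del.

Definition eqN N (p q : {poly int}) := forall i, (i < N)%N -> p`_i = q`_i.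

Lemma eqN_refl N p : eqN N p p. Proof. by []. Qed.
Lemma eqN_sym N p q : eqN N p q -> eqN N q p. Proof. by move=> H i /H. Qed.
Lemma eqN_trans N p q r : eqN N p q -> eqN N q r -> eqN N p r.
Proof. by move=> H1 H2 i Hi; rewrite H1 // H2. Qed.
Lemma eqN_add N p1 p2 q1 q2 : eqN N p1 q1 -> eqN N p2 q2 -> eqN N (p1 + p2) (q1 + q2).
Proof. by move=> H1 H2 i Hi; rewrite !coefD H1 // H2. Qed.
Lemma eqN_mull N r p q : eqN N p q -> eqN N (r * p) (r * q).
Proof.
move=> H i Hi; rewrite !coefM; apply: eq_bigr => j _; rewrite H //.
exact: leq_ltn_trans (leq_subr _ _) Hi.
Qed.

Definition G (S : {set 'I_n}) N : {poly int} := \poly_(d < N) (Qs S d)%:R.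

Lemma G_set0 N : eqN N (G set0 N) 1.
Proof.
move=> i Hi; rewrite coef_poly Hi coef1; case: i Hi => [|i] _; first by rewrite Qs0.
by rewrite Qs_set0.
Qed.

Lemma G_del (v : 'I_n) (S : {set 'I_n}) N : ~~ E v v -> v \in S ->
  eqN N (G S N) (G (S :\ v) N + 'X * G (S :\: Nb v) N).
Proof.
move=> Evv vS i Hi; rewrite coefD coefXM !coef_poly Hi.
case: i Hi => [|i] Hi /=; first by rewrite !Qs0 addr0.
by rewrite (Qs_del Evv) // (ltnW Hi) natrD.
Qed.

Lemma G_iso (v : 'I_n) (S : {set 'I_n}) N : ~~ E v v -> v \in S -> S :\: Nb v = S ->
  eqN N ((1 - 'X) * G S N) (G (S :\ v) N).
Proof.
move=> Evv vS HS.
have H := G_del (N := N) Evv vS; rewrite HS in H.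
by move=> i Hi; rewrite mulrBl mul1r coefB H // coefD addrK.
Qed.

Definition Iv a L := [set i : 'I_n | (a <= i < a + L)%N].

Definition pathlike a L := forall i j : 'I_n, (a <= i < a + L)%N -> (a <= j < a + L)%N ->
  E i j = ((j:nat) == i.+1) || ((i:nat) == j.+1).

Lemma interval a L : (a + L <= n)%N -> pathlike a L ->
  forall N, eqN N ((1-'X)^+(cL L) * G (Iv a L) N) (pL L).
Proof.
elim/ltn_ind: L => L IH Hn Hp N.
case: L IH Hn Hp => [|[|L]] IH Hn Hp.
- rewrite (_ : Iv a 0 = set0); first by rewrite expr0 mul1r; exact: G_set0.
  by apply/setP => i; rewrite !inE; lia.
- have Ha : (a < n)%N by lia.
  pose v := Ordinal Ha.
  have Hv : (a <= v < a + 1)%N by rewrite /=; lia.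
  have Evv : ~~ E v v by rewrite (Hp v v Hv Hv); lia.
  have vS : v \in Iv a 1 by rewrite inE.
  have HS : Iv a 1 :\: Nb v = Iv a 1.
    apply/setP => i; rewrite !inE; case: (boolP (a <= i < a + 1)%N) => Hi; rewrite ?andbF //.
    by rewrite (Hp v i Hv Hi) (Hp i v Hi Hv) /=; lia.
  have Hset : Iv a 1 :\ v = set0.
    by apply/setP => i; rewrite !inE -val_eqE /=; lia.
  have := G_iso (N:=N) Evv vS HS; rewrite Hset => H.
  rewrite /cL /= expr1.
  rewrite pL1; exact (eqN_trans H (G_set0 (N:=N))).
- have Ha : (a + L.+1 < n)%N by lia.
  pose v := Ordinal Ha.
  have Hv : (a <= v < a + L.+2)%N by rewrite /=; lia.
  have Evv : ~~ E v v by rewrite (Hp v v Hv Hv); lia.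
  have vS : v \in Iv a L.+2 by rewrite inE.
  set T := Iv a L :|: [set v].
  have HS1 : Iv a L.+2 :\ v = Iv a L.+1.
    by apply/setP => i; rewrite !inE -val_eqE /=; lia.
  have HS2 : Iv a L.+2 :\: Nb v = T.
    apply/setP => i; rewrite !inE -val_eqE /=.
    case: (boolP (a <= i < a + L.+2)%N) => Hi; last by rewrite andbF; lia.
    by rewrite (Hp v i Hv Hi) (Hp i v Hi Hv) /=; lia.
  have vT : v \in T by rewrite !inE eqxx orbT.
  have HT1 : T :\ v = Iv a L.
    by apply/setP => i; rewrite !inE -val_eqE /=; lia.
  have HT2 : T :\: Nb v = T.
    apply/setP => i; rewrite !inE -val_eqE /=.
    case: (boolP (a <= i < a + L.+2)%N) => Hi; last first.
      have -> : ((a <= i < a + L)%N || ((i:nat) == (a + L.+1)%N)) = false by lia.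
      by rewrite andbF.
    by rewrite (Hp v i Hv Hi) (Hp i v Hi Hv) /=; lia.
  have H1 := G_del (N:=N) Evv vS; rewrite HS1 HS2 in H1.
  have H2 := G_iso (N:=N) Evv vT HT2; rewrite HT1 in H2.
  have IH1 := IH L.+1 (ltnSn _) (_ : a + L.+1 <= n)%N.
  have {IH1} IH1 := IH1 ltac:(lia) (fun i j Hi Hj => Hp i j ltac:(lia) ltac:(lia)).
  have IH0 := IH L (ltnW (ltnSn _)) (_ : a + L <= n)%N.
  have {IH0} IH0 := IH0 ltac:(lia) (fun i j Hi Hj => Hp i j ltac:(lia) ltac:(lia)).
  apply: (eqN_trans (eqN_mull _ H1)).
  have He1 : cL L.+2 = (cL L.+2 - cL L.+1 + cL L.+1)%N by rewrite /cL; lia.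
  have He2 : cL L.+2 = (cL L).+1 by rewrite /cL; lia.
  have -> : (1 - 'X) ^+ cL L.+2 * (G (Iv a L.+1) N + 'X * G T N) =
    (1 - 'X) ^+ (cL L.+2 - cL L.+1) * ((1 - 'X) ^+ cL L.+1 * G (Iv a L.+1) N)
    + 'X * ((1 - 'X) ^+ cL L * ((1 - 'X) * G T N)).
    rewrite mulrDr; congr (_ + _); first by rewrite {1}He1 exprD mulrA.
    rewrite He2 exprSr; ring.
  rewrite pLS; apply: eqN_add; apply: eqN_mull; first exact: IH1.
  exact: (eqN_trans (eqN_mull _ H2) (IH0 N)).
Qed.
End Count.

Lemma coef_1subX D j : ((1 - 'X)^+D : {poly int})`_j = (-1)^+j * ('C(D,j))%:R.
Proof.
elim: D j => [|D IH] j.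
  by rewrite expr0 coef1; case: j => [|j]; rewrite ?bin0 ?bin0n ?expr0 ?mulr1 ?mulr0.
rewrite exprS mulrBl mul1r coefB coefXM IH.
case: j => [|j] /=; first by rewrite !bin0 subr0.
by rewrite IH binS natrD exprS; ring.
Qed.

Lemma hs_coef (HF : nat -> nat) D i N : (i < N)%N ->
  hs_times_pow HF D i = ((1-'X)^+D * \poly_(d < N) (HF d)%:R : {poly int})`_i.
Proof.
move=> HiN; rewrite coefM /hs_times_pow.
rewrite (big_ord_widen_cond (D.+1 + i.+1) (fun j => j <= i)%N
  (fun j : nat => (-1)^+j * ('C(D,j))%:R * (HF (i - j)%N)%:R : int)) ?leq_addr //.
rewrite (big_ord_widen (D.+1 + i.+1) (fun j : nat => ((1-'X)^+D : {poly int})`_j *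
  (\poly_(d < N) (HF d)%:R : {poly int})`_(i - j))) ?leq_addl //.
rewrite big_mkcond [RHS]big_mkcond; apply: eq_bigr => j _ /=.
rewrite coef_1subX coef_poly.
case: (leqP j i) => Hji; last by have -> : (j < i.+1)%N = false by rewrite ltnS leqNgt Hji.
rewrite [(j < i.+1)%N]ltnS Hji /= (leq_ltn_trans (leq_subr _ _) HiN).
case: (ltnP j D.+1) => HjD //.
by rewrite bin_small // mulr0 mul0r.
Qed.

Lemma horner_1subX k : ((1 - 'X)^+k.+1 : {poly int}).[1] = 0.
Proof. by rewrite horner_exp !hornerE subrr expr0n. Qed.

Lemma hpoly_from (HF : nat -> nat) (a : nat) (h : {poly int}) e :
  (forall N, eqN N ((1-'X)^+a * \poly_(d < N) (HF d)%:R) h) ->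
  h.[1] != 0 -> (size h).-1 = e -> hpoly_deg_is HF e.
Proof.
move=> H h1 he; split.
  exists h, a; split => // i.
  by rewrite (hs_coef _ _ (ltnSn i)) (H i.+1 i (ltnSn i)).
move=> h' D [Hh' Hh'1].
have key : forall N, eqN N ((1-'X)^+D * \poly_(d < N) (HF d)%:R) h'.
  by move=> N i Hi; rewrite Hh' (hs_coef _ _ Hi).
case: (leqP a D) => HaD.
  have Eh : h' = (1 - 'X)^+(D - a) * h.
    apply/polyP => i.
    rewrite -(key i.+1 i (ltnSn i)) -(eqN_mull ((1 - 'X)^+(D - a)) (H i.+1) (ltnSn i)).
    by rewrite mulrA -exprD subnK.
  move: Hh'1; rewrite Eh; case: (D - a)%N => [|k]; last by rewrite hornerM horner_1subX mul0r eqxx.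
  by rewrite expr0 mul1r => _.
have Eh : h = (1 - 'X)^+(a - D) * h'.
  apply/polyP => i.
  rewrite -(H i.+1 i (ltnSn i)) -(eqN_mull ((1 - 'X)^+(a - D)) (key i.+1) (ltnSn i)).
  by rewrite mulrA -exprD subnK // ltnW.
move: h1; rewrite Eh (_ : (a - D)%N = (a - D - 1).+1); last by lia.
by rewrite hornerM horner_1subX mul0r eqxx.
Qed.

Lemma cL_diff L : (cL L.+2 - cL L.+1)%N = odd L.
Proof. rewrite /cL; lia. Qed.

Lemma coef_pLS L j : (pL L.+2)`_j =
  (if odd L then (pL L.+1)`_j - (if j == 0%N then 0 else (pL L.+1)`_j.-1) else (pL L.+1)`_j)
  + (if j == 0%N then 0 else (pL L)`_j.-1).
Proof.
rewrite pLS cL_diff coefD coefXM; case: (odd L) => /=.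
  by rewrite expr1 mulrBl mul1r coefB coefXM.
by rewrite expr0 mul1r.
Qed.

Lemma pL_van L : forall j, (cL L < j)%N -> (pL L)`_j = 0.
Proof.
elim/ltn_ind: L => L IH j Hj.
case: L IH Hj => [|[|L]] IH Hj.
- by rewrite pL0 coef1; case: j Hj.
- by rewrite pL1 coef1; case: j Hj.
rewrite coef_pLS.
have Hj0 : (j == 0%N) = false by apply/negbTE; rewrite -lt0n; exact: leq_ltn_trans (leq0n _) Hj.
rewrite Hj0 (IH L.+1 (ltnSn _) j) ?(IH L (ltnW (ltnSn _)) j.-1); last 2 first.
- by move: Hj; rewrite /cL; lia.
- by move: Hj; rewrite /cL; lia.
case HL: (odd L); last by rewrite addr0.
rewrite (IH L.+1 (ltnSn _) j.-1) ?subr0 ?addr0 //.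
by move: Hj HL; rewrite /cL; lia.
Qed.

Definition tL L := (pL L)`_(cL L).
Definition sL L := (pL L)`_((cL L).-1).

Lemma tL_rec L : tL L.+2 = (if odd L then - tL L.+1 else tL L.+1) + tL L.
Proof.
rewrite {1}/tL coef_pLS.
have H1 : (cL L.+2 == 0%N) = false by rewrite /cL; lia.
have H2 : (cL L.+2).-1 = cL L by rewrite /cL; lia.
rewrite H1 H2; case HL: (odd L).
  have H3 : cL L = cL L.+1 by move: HL; rewrite /cL; lia.
  rewrite pL_van; last by move: HL; rewrite /cL; lia.
  by rewrite {1}H3 sub0r.
have H3 : cL L.+2 = cL L.+1 by move: HL; rewrite /cL; lia.
by rewrite H3.
Qed.

Lemma sL_rec L : (0 < L)%N ->
  sL L.+2 = (if odd L then tL L.+1 - sL L.+1 else sL L.+1) + sL L.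
Proof.
move=> L0; rewrite {1}/sL coef_pLS.
have H2 : (cL L.+2).-1 = cL L by rewrite /cL; lia.
have H1 : (cL L == 0%N) = false by rewrite /cL; lia.
rewrite H2 H1; case HL: (odd L).
  have H3 : cL L = cL L.+1 by move: HL; rewrite /cL; lia.
  by rewrite {1 2}H3.
have H3 : cL L = (cL L.+1).-1 by move: HL L0; rewrite /cL; lia.
by rewrite {1}H3.
Qed.

Lemma tL0 : tL 0 = 1. Proof. by rewrite /tL pL0 coef1. Qed.
Lemma tL1 : tL 1 = 0. Proof. by rewrite /tL pL1 coef1. Qed.
Lemma sL1 : sL 1 = 1. Proof. by rewrite /sL pL1 coef1. Qed.
Lemma tL2 : tL 2 = 1. Proof. by rewrite tL_rec /= tL1 tL0 add0r. Qed.
Lemma sL2 : sL 2 = 1.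
Proof. by rewrite /sL coef_pLS /= /cL /= pL1 coef1 addr0. Qed.

Lemma tR L L1 L2 : L1 = L.+1 -> L2 = L.+2 ->
  tL L2 = (if odd L then - tL L1 else tL L1) + tL L.
Proof. by move=> -> ->; exact: tL_rec. Qed.
Lemma sR L L1 L2 : (0 < L)%N -> L1 = L.+1 -> L2 = L.+2 ->
  sL L2 = (if odd L then tL L1 - sL L1 else sL L1) + sL L.
Proof. by move=> H -> ->; exact: sL_rec. Qed.

Lemma PoszS m : (m.+1)%:Z = m%:Z + 1.
Proof. by rewrite -addn1 PoszD. Qed.

Definition block m :=
  let sg := ((-1)^+m : int) in let M := m%:Z in
  tL (6* m+1) = 0 /\ sL (6* m+1) = sg*(2*M+1) /\
  tL (6* m+2) = sg /\ sL (6* m+2) = sg*(M+1) /\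
  tL (6* m+3) = -sg /\ sL (6* m+3) = sg*(M+1) /\
  tL (6* m+4) = 0 /\ sL (6* m+4) = sg*(2*M+2) /\
  tL (6* m+5) = -sg /\ sL (6* m+5) = -sg*(M+1) /\
  tL (6* m+6) = -sg /\ sL (6* m+6) = sg*(M+1).

Ltac oddE L := rewrite (_ : odd L = true); last by lia.
Ltac evenE L := rewrite (_ : odd L = false); last by lia.

Lemma block_all m : block m.
Proof.
elim: m => [|m [t1 [s1 [t2 [s2 [t3 [s3 [t4 [s4 [t5 [s5 [t6 s6]]]]]]]]]]]].
  rewrite /block expr0 /=.
  have t3 : tL 3 = -1 by rewrite tL_rec /= tL2 tL1 addr0.
  have s3 : sL 3 = 1 by rewrite sL_rec //= tL2 sL2 sL1; ring.
  have t4 : tL 4 = 0 by rewrite tL_rec /= t3 tL2; ring.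
  have s4 : sL 4 = 2 by rewrite sL_rec //= s3 sL2.
  have t5 : tL 5 = -1 by rewrite tL_rec /= t4 t3; ring.
  have s5 : sL 5 = -1 by rewrite sL_rec //= t4 s4 s3; ring.
  have t6 : tL 6 = -1 by rewrite tL_rec /= t5 t4; ring.
  have s6 : sL 6 = 1 by rewrite sL_rec //= s5 s4; ring.
  rewrite t3 s3 t4 s4 t5 s5 t6 s6 tL1 sL1 tL2 sL2.
  by do !split; ring.
rewrite /block exprS mulN1r PoszS /=.
set sg := ((-1)^+m : int) in t1 s1 t2 s2 t3 s3 t4 s4 t5 s5 t6 s6 *.
set M := m%:Z in s1 s2 s3 s4 s5 s6 *.
have t7 : tL (6* m.+1+1) = 0.
  rewrite (tR (L:=(6* m+5)%N) (L1:=(6* m+6)%N) (L2:=(6* m.+1+1)%N) ltac:(lia) ltac:(lia)); oddE (6* m+5)%N.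
  rewrite t6 t5; ring.
have s7 : sL (6* m.+1+1) = - sg * (2 * (M + 1) + 1).
  rewrite (sR (L:=(6* m+5)%N) (L1:=(6* m+6)%N) (L2:=(6* m.+1+1)%N) ltac:(lia) ltac:(lia) ltac:(lia)); oddE (6* m+5)%N.
  rewrite t6 s6 s5; ring.
have t8 : tL (6* m.+1+2) = - sg.
  rewrite (tR (L:=(6* m+6)%N) (L1:=(6* m.+1+1)%N) (L2:=(6* m.+1+2)%N) ltac:(lia) ltac:(lia)); evenE (6* m+6)%N.
  rewrite t7 t6; ring.
have s8 : sL (6* m.+1+2) = - sg * (M + 1 + 1).
  rewrite (sR (L:=(6* m+6)%N) (L1:=(6* m.+1+1)%N) (L2:=(6* m.+1+2)%N) ltac:(lia) ltac:(lia) ltac:(lia)); evenE (6* m+6)%N.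
  rewrite s7 s6; ring.
have t9 : tL (6* m.+1+3) = - - sg.
  rewrite (tR (L:=(6* m.+1+1)%N) (L1:=(6* m.+1+2)%N) (L2:=(6* m.+1+3)%N) ltac:(lia) ltac:(lia)); oddE (6* m.+1+1)%N.
  rewrite t8 t7; ring.
have s9 : sL (6* m.+1+3) = - sg * (M + 1 + 1).
  rewrite (sR (L:=(6* m.+1+1)%N) (L1:=(6* m.+1+2)%N) (L2:=(6* m.+1+3)%N) ltac:(lia) ltac:(lia) ltac:(lia)); oddE (6* m.+1+1)%N.
  rewrite t8 s8 s7; ring.
have t10 : tL (6* m.+1+4) = 0.
  rewrite (tR (L:=(6* m.+1+2)%N) (L1:=(6* m.+1+3)%N) (L2:=(6* m.+1+4)%N) ltac:(lia) ltac:(lia)); evenE (6* m.+1+2)%N.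
  rewrite t9 t8; ring.
have s10 : sL (6* m.+1+4) = - sg * (2 * (M + 1) + 2).
  rewrite (sR (L:=(6* m.+1+2)%N) (L1:=(6* m.+1+3)%N) (L2:=(6* m.+1+4)%N) ltac:(lia) ltac:(lia) ltac:(lia)); evenE (6* m.+1+2)%N.
  rewrite s9 s8; ring.
have t11 : tL (6* m.+1+5) = - - sg.
  rewrite (tR (L:=(6* m.+1+3)%N) (L1:=(6* m.+1+4)%N) (L2:=(6* m.+1+5)%N) ltac:(lia) ltac:(lia)); oddE (6* m.+1+3)%N.
  rewrite t10 t9; ring.
have s11 : sL (6* m.+1+5) = - - sg * (M + 1 + 1).
  rewrite (sR (L:=(6* m.+1+3)%N) (L1:=(6* m.+1+4)%N) (L2:=(6* m.+1+5)%N) ltac:(lia) ltac:(lia) ltac:(lia)); oddE (6* m.+1+3)%N.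
  rewrite t10 s10 s9; ring.
have t12 : tL (6* m.+1+6) = - - sg.
  rewrite (tR (L:=(6* m.+1+4)%N) (L1:=(6* m.+1+5)%N) (L2:=(6* m.+1+6)%N) ltac:(lia) ltac:(lia)); evenE (6* m.+1+4)%N.
  rewrite t11 t10; ring.
have s12 : sL (6* m.+1+6) = - sg * (M + 1 + 1).
  rewrite (sR (L:=(6* m.+1+4)%N) (L1:=(6* m.+1+5)%N) (L2:=(6* m.+1+6)%N) ltac:(lia) ltac:(lia) ltac:(lia)); evenE (6* m.+1+4)%N.
  rewrite s11 s10; ring.
by rewrite t7 s7 t8 s8 t9 s9 t10 s10 t11 s11 t12 s12.
Qed.

Lemma size_eq (p : {poly int}) e : p`_e != 0 -> (forall j, (e < j)%N -> p`_j = 0) -> (size p).-1 = e.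
Proof.
move=> H1 H2.
have Hs : (size p <= e.+1)%N by apply/leq_sizeP => j Hj; exact: H2.
have He : (e < size p)%N.
  by rewrite ltnNge; apply: contra H1 => /leq_sizeP H; rewrite H.
lia.
Qed.

Lemma pL_pos L : 0 < (pL L).[1].
Proof.
elim/ltn_ind: L => L IH; case: L IH => [|[|L]] IH.
- by rewrite pL0 hornerE.
- by rewrite pL1 hornerE.
have H0 := IH L (ltnW (ltnSn _)); have H1 := IH L.+1 (ltnSn _).
rewrite pLS cL_diff !hornerE; case: (odd L); rewrite ?expr1 ?expr0 /=.
  by rewrite subrr mul0r add0r.
by rewrite mul1r addr_gt0.
Qed.

Lemma sg_neq0 m : ((-1)^+m : int) != 0.
Proof. by rewrite expf_neq0 // oppr_eq0 oner_eq0. Qed.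

Lemma decomp6 L : (0 < L)%N -> exists m r, (r < 6)%N /\ L = (6 * m + r.+1)%N.
Proof. move=> H; exists (L.-1 %/ 6)%N, (L.-1 %% 6)%N; split; lia. Qed.

Lemma path_vals n : (0 < n)%N ->
  if (n %% 3 == 1)%N then tL n = 0 /\ sL n != 0 else tL n != 0.
Proof.
move=> /decomp6 [m [r [Hr ->]]].
have := block_all m; rewrite /block.
move: (sg_neq0 m); set sg := ((-1)^+m : int) => Hsg.
move=> [t1 [s1 [t2 [s2 [t3 [s3 [t4 [s4 [t5 [s5 [t6 s6]]]]]]]]]]].
case: r Hr => [|[|[|[|[|[|r]]]]]] Hr //.
- rewrite (_ : ((6 * m + 1) %% 3 == 1)%N = true); last by lia.
  by rewrite t1 s1; split => //; rewrite mulf_neq0 //; lia.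
- rewrite (_ : ((6 * m + 2) %% 3 == 1)%N = false); last by lia.
  by rewrite t2.
- rewrite (_ : ((6 * m + 3) %% 3 == 1)%N = false); last by lia.
  by rewrite t3 oppr_eq0.
- rewrite (_ : ((6 * m + 4) %% 3 == 1)%N = true); last by lia.
  by rewrite t4 s4; split => //; rewrite mulf_neq0 //; lia.
- rewrite (_ : ((6 * m + 5) %% 3 == 1)%N = false); last by lia.
  by rewrite t5 oppr_eq0.
- rewrite (_ : ((6 * m + 6) %% 3 == 1)%N = false); last by lia.
  by rewrite t6 oppr_eq0.
Qed.

Lemma cyc_vals L : tL L.+2 + tL L != 0.
Proof.
case: L => [|L]; first by rewrite tL2 tL0.
have [m [r [Hr ->]]] := decomp6 (ltn0Sn L).
have := block_all m.+1; rewrite /block.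
move=> [u1 [_ [u2 _]]].
have := block_all m; rewrite /block.
move: (sg_neq0 m); set sg := ((-1)^+m : int) => Hsg.
move=> [t1 [s1 [t2 [s2 [t3 [s3 [t4 [s4 [t5 [s5 [t6 s6]]]]]]]]]]].
rewrite exprS mulN1r -/sg in u1 u2.
case: r Hr => [|[|[|[|[|[|r]]]]]] Hr //.
- rewrite (_ : ((6 * m + 1).+2 = 6 * m + 3)%N); last by lia.
  by rewrite t3 t1 addr0 oppr_eq0.
- rewrite (_ : ((6 * m + 2).+2 = 6 * m + 4)%N); last by lia.
  by rewrite t4 t2 add0r.
- rewrite (_ : ((6 * m + 3).+2 = 6 * m + 5)%N); last by lia.
  rewrite t5 t3 -opprD oppr_eq0 -mulr2n mulrn_eq0 negb_or Hsg.
  by [].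
- rewrite (_ : ((6 * m + 4).+2 = 6 * m + 6)%N); last by lia.
  by rewrite t6 t4 addr0 oppr_eq0.
- rewrite (_ : ((6 * m + 5).+2 = 6 * m.+1 + 1)%N); last by lia.
  by rewrite u1 t5 add0r oppr_eq0.
- rewrite (_ : ((6 * m + 6).+2 = 6 * m.+1 + 2)%N); last by lia.
  rewrite u2 t6 -opprD oppr_eq0 -mulr2n mulrn_eq0 negb_or Hsg.
  by [].
Qed.

Lemma poly_hilb (k : fieldType) n (E : rel 'I_n) N :
  \poly_(d < N) ((hilb k E d)%:R : int) = G E setT N.
Proof. by apply: eq_poly => d _; rewrite hilbQ. Qed.

Lemma path_main (k : fieldType) n : (1 <= n)%N ->
  hpoly_deg_is (@hilb k n (path_rel n))
    (if (n %% 3 == 1)%N then ((n.+1) %/ 2).-1 else (n.+1) %/ 2)%N.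
Proof.
move=> Hn.
have HI : Iv n 0 n = setT by apply/setP => i; rewrite !inE /=; have := ltn_ord i; lia.
have H : forall N, eqN N ((1-'X)^+(cL n) * \poly_(d < N) ((hilb k (path_rel n) d)%:R : int)) (pL n).
  move=> N; rewrite poly_hilb -HI; apply: interval => //.
apply: (hpoly_from H); first by rewrite gt_eqF // pL_pos.
have := path_vals Hn.
case: ifP => _.
  move=> [Ht Hs]; apply: size_eq => //.
  move=> j Hj; case: (eqVneq j (cL n)) => [->|jn]; first exact: Ht.
  by apply: pL_van; move: Hj jn; rewrite /cL; lia.
move=> Ht; apply: size_eq => //; exact: pL_van.
Qed.

Lemma succ_mod n (i : 'I_n) : (i.+1 %% n)%N = if (i.+1 == n)%N then 0%N else i.+1.
Proof.
case: eqP => [->|ne]; first by rewrite modnn.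
by rewrite modn_small //; have := ltn_ord i; lia.
Qed.

Lemma cycE n (i j : 'I_n) : cycle_rel n i j =
  [|| (j:nat) == i.+1, ((i.+1 == n) && ((j:nat) == 0)), (i:nat) == j.+1 | ((j.+1 == n) && ((i:nat) == 0))]%N.
Proof.
rewrite /cycle_rel !succ_mod; have := ltn_ord i; have := ltn_ord j.
by case: ifP => H1; case: ifP => H2; lia.
Qed.

Lemma cycle_main (k : fieldType) n : (3 <= n)%N ->
  hpoly_deg_is (@hilb k n (cycle_rel n)) (n %/ 2)%N.
Proof.
case: n => [|[|[|L]]] // _.
set n := L.+3.
set E := cycle_rel n.
pose v : 'I_n := ord_max.
have Evv : ~~ E v v by rewrite /E cycE /=; lia.
have vS : v \in [set: 'I_n] by rewrite inE.
set T := Iv n 1 L :|: [set v].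
have HS1 : [set: 'I_n] :\ v = Iv n 0 L.+2.
  by apply/setP => i; rewrite !inE -val_eqE /=; have := ltn_ord i; lia.
have HS2 : [set: 'I_n] :\: Nb E v = T.
  apply/setP => i; rewrite !inE -val_eqE /= /E !cycE /=; have := ltn_ord i; lia.
have vT : v \in T by rewrite !inE eqxx orbT.
have HT1 : T :\ v = Iv n 1 L.
  by apply/setP => i; rewrite !inE -val_eqE /=; have := ltn_ord i; lia.
have HT2 : T :\: Nb E v = T.
  apply/setP => i; rewrite !inE -val_eqE /= /E !cycE /=; have := ltn_ord i; lia.
have H1 : forall N, eqN N (G E setT N) (G E (Iv n 0 L.+2) N + 'X * G E T N).
  by move=> N; have := G_del (N:=N) Evv vS; rewrite HS1 HS2.
have H2 : forall N, eqN N ((1 - 'X) * G E T N) (G E (Iv n 1 L) N).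
  by move=> N; have := G_iso (N:=N) Evv vT HT2; rewrite HT1.
have P1 : forall N, eqN N ((1-'X)^+(cL L.+2) * G E (Iv n 0 L.+2) N) (pL L.+2).
  apply: interval; first by rewrite /n; lia.
  by move=> i j Hi Hj; rewrite /E cycE; lia.
have P2 : forall N, eqN N ((1-'X)^+(cL L) * G E (Iv n 1 L) N) (pL L).
  apply: interval; first by rewrite /n; lia.
  by move=> i j Hi Hj; rewrite /E cycE; lia.
have He : cL L.+2 = (cL L).+1 by rewrite /cL; lia.
apply: (hpoly_from (a := cL L.+2) (h := pL L.+2 + 'X * pL L)).
- move=> N; rewrite poly_hilb.
  apply: (eqN_trans (eqN_mull _ (H1 N))).
  have -> : (1 - 'X) ^+ cL L.+2 * (G E (Iv n 0 L.+2) N + 'X * G E T N) =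
    (1 - 'X) ^+ cL L.+2 * G E (Iv n 0 L.+2) N + 'X * ((1 - 'X) ^+ cL L * ((1 - 'X) * G E T N)).
    rewrite mulrDr; congr (_ + _); rewrite He exprSr; ring.
  apply: eqN_add; first exact: P1.
  apply: eqN_mull; exact: (eqN_trans (eqN_mull _ (H2 N)) (P2 N)).
- by rewrite hornerD hornerM hornerX mul1r gt_eqF // addr_gt0 // pL_pos.
rewrite (_ : (n %/ 2)%N = cL L.+2) //.
apply: size_eq.
  rewrite coefD coefXM He /= -He; exact: cyc_vals.
move=> j Hj; rewrite coefD coefXM pL_van // add0r.
case: eqP => // _; apply: pL_van; move: Hj; rewrite He; lia.
Qed.

Close Scope ring_scope.

Theorem theorem4p5 :
  (forall (k : fieldType) (n : nat), (3 <= n)%N ->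
     hpoly_deg_is (@hilb k n (cycle_rel n)) (n %/ 2)) /\
  (forall (k : fieldType) (n : nat), (1 <= n)%N ->
     hpoly_deg_is (@hilb k n (path_rel n))
       (if (n %% 3 == 1)%N then ((n.+1) %/ 2).-1 else (n.+1) %/ 2)).
Proof.
split; [exact: cycle_main | exact: path_main].
Qed.
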